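(* Let $q\ge 2$ be a prime power, $n=q^2(q^2-q+1)$, $m=2^{24}q^2$, and let $X\subseteq V(H_q)$ with $|X|=m$. Then at least one of the following holds: (a) $\displaystyle\sum_{T\in\mathcal T_X,\ |T|\le \sqrt{2m}/\log n}\binom{|T|}{2}\;\ge\;\frac{m^2}{64q}$; (b) $\displaystyle\sum_{T\in\mathcal T_X,\ \sqrt{2m}/\log n<|T|\le \sqrt{2m}}\binom{|T|}{2}\;\ge\;\frac{q\,m^{3/2}}{16\log^2 n}$. (Each sum counts the edges of $H_q[X]$ lying in the cliques of $\mathcal T_X$ of the indicated orders.)
   Context: $\mathcal H$ is the Hermitian unital $\{\langle x,y,z\rangle : x^{q+1}+y^{q+1}+z^{q+1}=0\}$ in the projective plane $\mathrm{PG}(2,q^2)$ (it has $q^3+1$ points and every line meets it in $1$ or $q+1$ points; lines meeting it in $q+1$ points are secants). $H_q$ is the graph on the set of secants, two distinct secants adjacent iff they meet in a point of $\mathcal H$. For $P\in\mathcal H$, $C_P$ is the set of secants through $P$ and $\mathcal C=\{C_P:P\in\mathcal H\}$; these are $q^3+1$ cliques of order $q^2$, any two sharing exactly one vertex, every vertex lies in exactly $q+1$ of them, and every edge of $H_q$ lies in exactly one of them. For $X\subseteq V(H_q)$, $\mathcal T_X=\{X\cap C : C\in\mathcal C,\ |X\cap C|\ge 2\}$ (indexed by the cliques $C$). Logarithms are natural. *)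

(* Defs.v *)
From HB Require Import structures.
From mathcomp Require Import all_boot all_order all_algebra all_field.
From mathcomp Require Import reals exp.
Set Implicit Arguments. Unset Strict Implicit. Unset Printing Implicit Defensive.
Import Order.TTheory GRing.Theory Num.Theory.
Local Open Scope ring_scope.

Section Hermitian.
Variable F : finFieldType.
Implicit Types (q : nat).

Definition vec := 'rV[F]_3.

Definition proj_pt (v : vec) : {set vec} := [set a *: v | a in [set a : F | a != 0]].

Definition PG_points : {set {set vec}} := [set proj_pt v | v in [set v : vec | v != 0]].

Definition proj_line (l : vec) : {set {set vec}} :=
  [set proj_pt v | v in [set v : vec | (v != 0) && (\sum_(i < 3) v 0 i * l 0 i == 0)]].

Definition PG_lines : {set {set {set vec}}} := [set proj_line l | l in [set l : vec | l != 0]].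

Definition herm (q : nat) (v : vec) : bool :=
  v 0 0 ^+ q.+1 + v 0 1 ^+ q.+1 + v 0 2 ^+ q.+1 == 0.

Definition unital (q : nat) : {set {set vec}} :=
  [set proj_pt v | v in [set v : vec | (v != 0) && herm q v]].

(* secants: lines meeting H in q+1 points; these are the vertices of H_q *)
Definition secants (q : nat) : {set {set {set vec}}} :=
  [set L in PG_lines | #|L :&: unital q| == q.+1].

Definition clique (q : nat) (P : {set vec}) : {set {set {set vec}}} :=
  [set L in secants q | P \in L].

Definition Tsize (q : nat) (X : {set {set {set vec}}}) (P : {set vec}) : nat :=
  #|X :&: clique q P|.

End Hermitian.

Definition prime_power (q : nat) : Prop := exists p k : nat, prime p /\ q = (p ^ k)%N.

(* Main.v *)
Require Import Defs.
From HB Require Import structures.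
From mathcomp Require Import all_boot all_order all_algebra all_field.
From mathcomp Require Import reals exp.
From mathcomp Require Import ring lra zify.
From mathcomp Require sequences.
Import Order.TTheory GRing.Theory Num.Theory.
Local Open Scope ring_scope.
Set Implicit Arguments. Unset Strict Implicit. Unset Printing Implicit Defensive.

Section Geo.
Variable F : finFieldType.
Local Notation V := ('rV[F]_3).

Lemma dotE (v l : V) : \sum_(i < 3) v 0 i * l 0 i = v 0 0 * l 0 0 + v 0 1 * l 0 1 + v 0 2 * l 0 2.
Proof. rewrite !big_ord_recr big_ord0 /= add0r; by congr (_ + _ + _); congr (_ * _); congr (_ _ _); apply: val_inj. Qed.

Lemma vec_eq (x y : V) : x 0 0 = y 0 0 -> x 0 1 = y 0 1 -> x 0 2 = y 0 2 -> x = y.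
Proof.
move=> h0 h1 h2; apply/rowP => i.
case: i => [[|[|[|//]]] Hi].
- by rewrite (_ : Ordinal Hi = 0) //; apply: val_inj.
- by rewrite (_ : Ordinal Hi = 1) //; apply: val_inj.
- by rewrite (_ : Ordinal Hi = 2) //; apply: val_inj.
Qed.

Lemma vec_neq0 (x : V) : x != 0 -> [\/ x 0 0 != 0, x 0 1 != 0 | x 0 2 != 0].
Proof.
move=> hx.
case: (eqVneq (x 0 0) 0) => h0; last by constructor 1.
case: (eqVneq (x 0 1) 0) => h1; last by constructor 2.
case: (eqVneq (x 0 2) 0) => h2; last by constructor 3.
suff e : x = 0 by rewrite e eqxx in hx.
by apply: vec_eq; rewrite mxE.
Qed.

Lemma scaleE (c : F) (x : V) i : (c *: x) 0 i = c * x 0 i.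
Proof. by rewrite mxE. Qed.

Lemma cross_prop (x y : V) : x != 0 ->
  x 0 1 * y 0 2 = x 0 2 * y 0 1 -> x 0 2 * y 0 0 = x 0 0 * y 0 2 ->
  x 0 0 * y 0 1 = x 0 1 * y 0 0 -> exists c, y = c *: x.
Proof.
move=> /vec_neq0 [] hx e1 e2 e3.
- exists (y 0 0 / x 0 0); apply: vec_eq; rewrite !scaleE; apply: (mulfI hx).
  + by field.
  + by rewrite e3; field.
  + by rewrite -e2; field.
- exists (y 0 1 / x 0 1); apply: vec_eq; rewrite !scaleE; apply: (mulfI hx).
  + by rewrite -e3; field.
  + by field.
  + by rewrite e1; field.
- exists (y 0 2 / x 0 2); apply: vec_eq; rewrite !scaleE; apply: (mulfI hx).
  + by rewrite e2; field.
  + by rewrite -e1; field.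
  + by field.
Qed.


Definition mk3 (a b c : F) : V := \row_(i < 3) nth 0 [:: a; b; c] i.
Lemma mk3E0 a b c : (mk3 a b c) 0 0 = a. Proof. by rewrite mxE. Qed.
Lemma mk3E1 a b c : (mk3 a b c) 0 1 = b. Proof. by rewrite mxE. Qed.
Lemma mk3E2 a b c : (mk3 a b c) 0 2 = c. Proof. by rewrite mxE. Qed.

Lemma two_lines (u u' l l' : V) : u != 0 -> u' != 0 -> l != 0 ->
  u 0 0 * l 0 0 + u 0 1 * l 0 1 + u 0 2 * l 0 2 = 0 ->
  u' 0 0 * l 0 0 + u' 0 1 * l 0 1 + u' 0 2 * l 0 2 = 0 ->
  u 0 0 * l' 0 0 + u 0 1 * l' 0 1 + u 0 2 * l' 0 2 = 0 ->
  u' 0 0 * l' 0 0 + u' 0 1 * l' 0 1 + u' 0 2 * l' 0 2 = 0 ->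
  (exists c, u' = c *: u) \/ (exists c, l' = c *: l).
Proof.
move=> hu hu' hl h1 h2 h3 h4.
set w := mk3 (l 0 1 * l' 0 2 - l 0 2 * l' 0 1) (l 0 2 * l' 0 0 - l 0 0 * l' 0 2)
             (l 0 0 * l' 0 1 - l 0 1 * l' 0 0).
case: (eqVneq w 0) => hw.
  right; apply: cross_prop hl _ _ _.
  - have := congr1 (fun z : V => z 0 0) hw; rewrite /w mk3E0 mxE => /eqP.
    by rewrite subr_eq0 => /eqP.
  - have := congr1 (fun z : V => z 0 1) hw; rewrite /w mk3E1 mxE => /eqP.
    by rewrite subr_eq0 => /eqP.
  - have := congr1 (fun z : V => z 0 2) hw; rewrite /w mk3E2 mxE => /eqP.
    by rewrite subr_eq0 => /eqP.
have key : forall v : V,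
  v 0 0 * l 0 0 + v 0 1 * l 0 1 + v 0 2 * l 0 2 = 0 ->
  v 0 0 * l' 0 0 + v 0 1 * l' 0 1 + v 0 2 * l' 0 2 = 0 -> v != 0 ->
  exists2 c, c != 0 & w = c *: v.
  move=> v e e' hv.
  have [c hc] : exists c, w = c *: v.
    apply: cross_prop hv _ _ _; apply/eqP; rewrite -subr_eq0 /w ?mk3E0 ?mk3E1 ?mk3E2.
    - have -> : v 0 1 * (l 0 0 * l' 0 1 - l 0 1 * l' 0 0) -
        v 0 2 * (l 0 2 * l' 0 0 - l 0 0 * l' 0 2) =
        l 0 0 * (v 0 0 * l' 0 0 + v 0 1 * l' 0 1 + v 0 2 * l' 0 2)
        - l' 0 0 * (v 0 0 * l 0 0 + v 0 1 * l 0 1 + v 0 2 * l 0 2) by ring.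
      by rewrite e e' !mulr0 subr0.
    - have -> : v 0 2 * (l 0 1 * l' 0 2 - l 0 2 * l' 0 1) -
        v 0 0 * (l 0 0 * l' 0 1 - l 0 1 * l' 0 0) =
        l 0 1 * (v 0 0 * l' 0 0 + v 0 1 * l' 0 1 + v 0 2 * l' 0 2)
        - l' 0 1 * (v 0 0 * l 0 0 + v 0 1 * l 0 1 + v 0 2 * l 0 2) by ring.
      by rewrite e e' !mulr0 subr0.
    - have -> : v 0 0 * (l 0 2 * l' 0 0 - l 0 0 * l' 0 2) -
        v 0 1 * (l 0 1 * l' 0 2 - l 0 2 * l' 0 1) =
        l 0 2 * (v 0 0 * l' 0 0 + v 0 1 * l' 0 1 + v 0 2 * l' 0 2)
        - l' 0 2 * (v 0 0 * l 0 0 + v 0 1 * l 0 1 + v 0 2 * l 0 2) by ring.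
      by rewrite e e' !mulr0 subr0.
  exists c => //; apply: contra_neq hw => c0; by rewrite hc c0 scale0r.
have [c c0 ec] := key u h1 h3 hu.
have [c' c0' ec'] := key u' h2 h4 hu'.
left; exists (c'^-1 * c); rewrite -scalerA -ec ec' scalerA mulVf ?scale1r //.
Qed.

Lemma proj_pt_scale (c : F) (u : V) : c != 0 -> proj_pt (c *: u) = proj_pt u.
Proof.
move=> hc; apply/setP => x; apply/imsetP/imsetP => [[a ha ->]|[a ha ->]].
- exists (a * c); last by rewrite scalerA.
  by move: ha; rewrite !inE => ha; rewrite mulf_neq0.
- exists (a / c); last by rewrite scalerA divfK.
  by move: ha; rewrite !inE => ha; rewrite mulf_neq0 ?invr_eq0.
Qed.

Lemma in_proj_pt (u : V) : u \in proj_pt u.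
Proof. by apply/imsetP; exists 1; rewrite ?inE ?oner_eq0 ?scale1r. Qed.

Lemma on_line (u l : V) : u != 0 -> proj_pt u \in proj_line l ->
  u 0 0 * l 0 0 + u 0 1 * l 0 1 + u 0 2 * l 0 2 = 0.
Proof.
move=> hu /imsetP[v]; rewrite inE => /andP[v0 /eqP]; rewrite dotE => dv e.
have := in_proj_pt u; rewrite e => /imsetP[a _ ->].
rewrite !scaleE.
have -> : a * v 0 0 * l 0 0 + a * v 0 1 * l 0 1 + a * v 0 2 * l 0 2 =
  a * (v 0 0 * l 0 0 + v 0 1 * l 0 1 + v 0 2 * l 0 2) by ring.
by rewrite dv mulr0.
Qed.

Lemma line_scale (c : F) (l : V) : c != 0 -> proj_line (c *: l) = proj_line l.
Proof.
move=> hc; apply/setP => P; apply/imsetP/imsetP => -[v hv ->]; exists v => //;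
  move: hv; rewrite !inE !dotE !scaleE.
- have -> : v 0 0 * (c * l 0 0) + v 0 1 * (c * l 0 1) + v 0 2 * (c * l 0 2) =
    c * (v 0 0 * l 0 0 + v 0 1 * l 0 1 + v 0 2 * l 0 2) by ring.
  by rewrite mulf_eq0 (negbTE hc).
- have -> : v 0 0 * (c * l 0 0) + v 0 1 * (c * l 0 1) + v 0 2 * (c * l 0 2) =
    c * (v 0 0 * l 0 0 + v 0 1 * l 0 1 + v 0 2 * l 0 2) by ring.
  by rewrite mulf_eq0 (negbTE hc).
Qed.

Lemma unital_pt q P : P \in unital F q -> exists2 u : V, u != 0 & P = proj_pt u.
Proof. by case/imsetP => u; rewrite inE => /andP[u0 _] ->; exists u. Qed.

Lemma lines_meet q (L1 L2 : {set {set V}}) P1 P2 :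
  L1 \in PG_lines F -> L2 \in PG_lines F ->
  P1 \in unital F q -> P2 \in unital F q -> P1 != P2 ->
  P1 \in L1 -> P2 \in L1 -> P1 \in L2 -> P2 \in L2 -> L1 = L2.
Proof.
case/imsetP => l; rewrite inE => hl ->; case/imsetP => l'; rewrite inE => hl' ->.
move=> /unital_pt[u hu ->] /unital_pt[u' hu' ->] hne a1 a2 a3 a4.
have [[c ec]|[c ec]] := two_lines hu hu' hl (on_line hu a1) (on_line hu' a2)
   (on_line hu a3) (on_line hu' a4).
- have c0 : c != 0 by apply: contra_neq hu' => c0; rewrite ec c0 scale0r.
  by move: hne; rewrite ec proj_pt_scale // eqxx.
- have c0 : c != 0 by apply: contra_neq hl' => c0; rewrite ec c0 scale0r.
  by rewrite ec line_scale.
Qed.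

Lemma roots_card (c : F) k : (0 < k)%N -> (#|[set x : F | x ^+ k == c]| <= k)%N.
Proof.
move=> hk.
have p0 : ('X^k - c%:P : {poly F}) != 0.
  by rewrite -size_poly_eq0 size_XnsubC.
have := @max_poly_roots _ _ (enum [set x : F | x ^+ k == c]) p0.
rewrite enum_uniq size_XnsubC // -cardE ltnS; apply => //.
by apply/allP => x; rewrite mem_enum inE /root !hornerE subr_eq0.
Qed.

Lemma card_fiber (T : finType) (A : {set T}) (g : T -> F) :
  #|A| = (\sum_(y : F) #|[set w in A | g w == y]|)%N.
Proof.
rewrite -sum1_card (partition_big g predT) //=; apply: eq_bigr => y _.
rewrite -sum1_card; apply: eq_bigl => w; by rewrite inE.
Qed.

Lemma herm_scale q (a : F) (v : V) : herm q v -> herm q (a *: v).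
Proof.
rewrite /herm !scaleE !exprMn -!mulrDr => /eqP ->; by rewrite mulr0.
Qed.

Definition D1 q := [set w : V | herm q w && (w 0 2 == 1)].
Definition D2 q := [set w : V | herm q w && (w 0 2 == 0) && (w 0 1 == 1)].

Lemma unital_norm q : unital F q \subset (@proj_pt F) @: (D1 q :|: D2 q).
Proof.
apply/subsetP => P /imsetP[v]; rewrite inE => /andP[v0 hv] ->.
case: (eqVneq (v 0 2) 0) => h2.
  case: (eqVneq (v 0 1) 0) => h1.
    exfalso; move: hv; rewrite /herm h1 h2 expr0n /= !addr0 expf_eq0 /= => h0.
    by have [] := vec_neq0 v0; rewrite ?h0 ?h1 ?h2 ?eqxx.
  apply/imsetP; exists ((v 0 1)^-1 *: v); last by rewrite proj_pt_scale ?invr_eq0.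
  by rewrite !inE herm_scale // !scaleE h2 mulr0 mulVf // !eqxx orbT.
apply/imsetP; exists ((v 0 2)^-1 *: v); last by rewrite proj_pt_scale ?invr_eq0.
by rewrite !inE herm_scale // !scaleE mulVf // eqxx.
Qed.

Lemma card_D1 q : (#|D1 q| <= #|F| * q.+1)%N.
Proof.
rewrite (card_fiber (D1 q) (fun w : V => w 0 1)).
apply: (@leq_trans (\sum_(y : F) q.+1)); last by rewrite sum_nat_const.
apply: leq_sum => y _.
rewrite -(card_in_imset (f := fun w : V => w 0 0)).
  apply: leq_trans (roots_card (-(y ^+ q.+1 + 1)) (ltn0Sn q)); apply: subset_leq_card.
  apply/subsetP => x /imsetP[w]; rewrite !inE => /andP[/andP[hw e2] /eqP e1] ->.
  by move: hw; rewrite /herm (eqP e2) e1 expr1n -addrA addr_eq0.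
move=> w1 w2; rewrite !inE => /andP[/andP[_ a2] /eqP a1] /andP[/andP[_ b2] /eqP b1] e0.
by apply: vec_eq => //; [rewrite a1 b1 | rewrite (eqP a2) (eqP b2)].
Qed.

Lemma card_D2 q : (#|D2 q| <= q.+1)%N.
Proof.
rewrite -(card_in_imset (f := fun w : V => w 0 0)).
  apply: leq_trans (roots_card (-1) (ltn0Sn q)); apply: subset_leq_card.
  apply/subsetP => x /imsetP[w]; rewrite !inE => /andP[/andP[hw e2] e1] ->.
  move: hw; rewrite /herm (eqP e2) (eqP e1) expr1n expr0n /= addr0.
  by rewrite addr_eq0.
move=> w1 w2; rewrite !inE => /andP[/andP[_ a2] a1] /andP[/andP[_ b2] b1] e0.
by apply: vec_eq => //; [rewrite (eqP a1) (eqP b1) | rewrite (eqP a2) (eqP b2)].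
Qed.

Lemma card_unital q : #|F| = (q ^ 2)%N -> (2 <= q)%N -> (#|unital F q| <= 2 * q ^ 3)%N.
Proof.
move=> hF hq.
apply: leq_trans (subset_leq_card (unital_norm q)) _.
apply: leq_trans (leq_imset_card _ _) _.
apply: leq_trans (leq_card_setU _ _) _.
apply: leq_trans (leq_add (card_D1 q) (card_D2 q)) _.
rewrite hF; nia.
Qed.

End Geo.


Section Inc.
Local Open Scope nat_scope.
Variables (T : finType) (X : {set {set T}}).
Definition tinc P := #|[set L in X | P \in L]|.

Lemma card_sum (I : finType) (A : {set I}) (p : pred I) :
  #|[set x in A | p x]| = \sum_(x in A) (p x : nat).
Proof.
rewrite -sum1_card big_mkcond /= [RHS]big_mkcond /=; apply: eq_bigr => x _.
by rewrite !inE; case: (x \in A); case: (p x).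
Qed.

Lemma inc_sum (A : {set T}) : \sum_(P in A) tinc P = \sum_(L in X) #|L :&: A|.
Proof.
rewrite /tinc; under eq_bigr do rewrite card_sum.
rewrite exchange_big; apply: eq_bigr => L _.
rewrite -card_sum; apply: eq_card => P; by rewrite !inE andbC.
Qed.

Lemma pair_bound (A : {set T}) :
  (forall P P', P \in A -> P' \in A -> P != P' ->
     #|[set L in X | (P \in L) && (P' \in L)]| <= 1) ->
  \sum_(L in X) #|L :&: A| ^ 2 <= \sum_(P in A) tinc P + #|A| ^ 2.
Proof.
move=> H.
have e : forall L, #|L :&: A| = \sum_(P in A) (P \in L : nat).
  by move=> L; rewrite -card_sum; apply: eq_card => P; rewrite !inE andbC.
under eq_bigr do rewrite e expnS expn1 big_distrl /=.
under eq_bigr do under eq_bigr do rewrite big_distrr /=.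
rewrite exchange_big /=.
under eq_bigr do rewrite exchange_big /=.
have -> : #|A| ^ 2 = \sum_(P in A) #|A| by rewrite sum_nat_const expnS expn1.
rewrite -big_split /=; apply: leq_sum => P hP.
rewrite (bigD1 P) //= -sum1_card.
apply: leq_add.
  rewrite /tinc card_sum; apply: eq_leq; apply: eq_bigr => L _; by case: (P \in L).
rewrite [X in _ <= X](bigD1 P) //= add1n ltnW // ltnS.
apply: leq_sum => P' /andP[hP' ne].
apply: leq_trans (H P P' hP hP' _); last by rewrite eq_sym.
rewrite card_sum; apply: eq_leq; apply: eq_bigr => L _.
by case: (P \in L); case: (P' \in L).
Qed.
End Inc.


Lemma cauchy (R : realFieldType) (I : finType) (P : pred I) (x : I -> R) :
  (\sum_(i | P i) x i) ^+ 2 <= (\sum_(i | P i) 1) * \sum_(i | P i) x i ^+ 2.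
Proof.
set n := \sum_(i | P i) (1 : R); set S := \sum_(i | P i) x i; set Q := \sum_(i | P i) x i ^+ 2.
have h0 : 0 <= \sum_(i | P i) \sum_(j | P j) (x i - x j) ^+ 2.
  by apply: sumr_ge0 => i _; apply: sumr_ge0 => j _; apply: sqr_ge0.
have e : forall i, \sum_(j | P j) (x i - x j) ^+ 2 = x i ^+ 2 * n - 2 * x i * S + Q.
  move=> i.
  have -> : \sum_(j | P j) (x i - x j) ^+ 2 =
     \sum_(j | P j) (x i ^+ 2 * 1 - 2 * x i * x j + x j ^+ 2).
    by apply: eq_bigr => j _; ring.
  by rewrite big_split /= sumrB -!mulr_sumr.
move: h0; under eq_bigr do rewrite e.
rewrite big_split /= sumrB -!mulr_suml -mulr_sumr -/S -/Q.
have -> : \sum_(i | P i) Q = Q * n by rewrite mulr_sumr; apply: eq_bigr => i _; rewrite mulr1.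
move=> h; nra.
Qed.
Lemma C2 (R : realFieldType) t : (2 <= t)%N -> (t%:R : R) ^+ 2 <= 4 * ('C(t, 2))%:R.
Proof.
move=> h; have e : (2 * 'C(t, 2) = t * t.-1)%N.
  by rewrite -(mul_bin_diag t 1) bin1.
rewrite -natrX -[4]/(2 * 2)%:R -natrM ler_nat -mulnA e.
by case: t h e => // t ht /= _; nia.
Qed.

Lemma sum_sub (R : realFieldType) (I : finType) (p1 p2 : pred I) (f : I -> R) :
  (forall i, p1 i -> p2 i) -> (forall i, p2 i -> 0 <= f i) ->
  \sum_(i | p1 i) f i <= \sum_(i | p2 i) f i.
Proof.
move=> h12 hf; rewrite [X in _ <= X](bigID p1) /=.
have -> : \sum_(i | p2 i && p1 i) f i = \sum_(i | p1 i) f i.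
  by apply: eq_bigl => i; case e: (p1 i); rewrite ?andbF ?andbT ?h12.
rewrite lerDl; apply: sumr_ge0 => i /andP[h _]; exact: hf.
Qed.

Lemma core (R : realFieldType) (I : finType) (U : {set I}) (t : I -> nat) (q m : nat)
  (s sm L : R) (hq : (2 <= q)%N) (hm : m = (2 ^ 24 * q ^ 2)%N) (hN : (#|U| <= 2 * q ^ 3)%N)
  (hsum : (\sum_(P in U) t P)%N = (m * q.+1)%N)
  (hs0 : 0 <= s) (hs2 : s ^+ 2 = 2 * m%:R) (hsm : 0 < sm) (hsm2 : sm ^+ 2 = m%:R)
  (hL : 2 <= L)
  (hB : \sum_(P in U | s < (t P)%:R) ((t P)%:R : R) <= 2 * m%:R) :
  ((\sum_(P in U | (2 <= t P)%N && ((t P)%:R <= s / L)) 'C(t P, 2))%:R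
      >= (m%:R ^+ 2 / (64 * q%:R) : R))
  \/
  ((\sum_(P in U | (2 <= t P)%N && (s / L < (t P)%:R) && ((t P)%:R <= s))
      'C(t P, 2))%:R
     >= (q%:R * (m%:R * sm) / (16 * L ^+ 2) : R)).
Proof.
set tr := fun P => (t P)%:R : R.
set z := L^-1.
have L0 : 0 < L by apply: lt_le_trans hL.
have z0 : 0 < z by rewrite invr_gt0.
have z2 : z <= 2^-1.
  by rewrite /z lef_pV2 ?posrE //; lra.
have hbnd : s / L <= s.
  by rewrite ler_pdivrMr // ler_peMr //; lra.
set Q : R := q%:R; set M : R := m%:R.
have Q2 : 2 <= Q by rewrite /Q (ler_nat R 2 q).
have hMQ : M = 2 ^+ 24 * Q ^+ 2 by rewrite /M /Q hm natrM natrX natrX.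
set a := fun P => (2 <= t P)%N && (tr P <= s / L).
set b := fun P => (2 <= t P)%N && (s / L < tr P) && (tr P <= s).
set c := fun P => s < tr P.
have hsumR : \sum_(P in U) tr P = M * (Q + 1).
  by rewrite /tr -natr_sum hsum natrM /M /Q -natr1.
rewrite (bigID a) /= in hsumR.
rewrite [X in _ + X](bigID b) /= in hsumR.
rewrite [X in _ + (_ + X)](bigID c) /= in hsumR.
set Ea := (\sum_(P in U | a P) 'C(t P, 2))%:R : R.
set Eb := (\sum_(P in U | b P) 'C(t P, 2))%:R : R.
case: (lerP (M ^+ 2 / (64 * Q)) Ea) => ha; [by left | right].
set Sa := \sum_(P in U | a P) tr P.
set Sb := \sum_(P in U | b P) tr P.
have tr0 : forall P, 0 <= tr P by move=> P; rewrite /tr ler0n.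
have Sa0 : 0 <= Sa by apply: sumr_ge0.
have Sb0 : 0 <= Sb by apply: sumr_ge0.
have hUc : \sum_(P in U) (1 : R) = (#|U|)%:R by rewrite sumr_const.
have hN' : (#|U|)%:R <= 2 * Q ^+ 3 :> R by rewrite /Q -natrX -natrM ler_nat.
have hSa : Sa ^+ 2 <= 2 * Q ^+ 3 * (4 * Ea).
  apply: le_trans (cauchy _ _) _.
  apply: ler_pM.
  - by apply: sumr_ge0.
  - by apply: sumr_ge0 => P _; apply: sqr_ge0.
  - apply: le_trans hN'; rewrite -hUc; apply: sum_sub => // P /andP[] //.
  - rewrite /Ea natr_sum mulr_sumr; apply: ler_sum => P /andP[_ /andP[h2 _]].
    exact: C2.
have ha' : 64 * Q * Ea <= M ^+ 2.
  by rewrite -ler_pdivlMl ?(ltW ha) //; lra.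
have hSa2 : Sa <= 3 / 8 * (Q * M).
  have K0 : 0 <= Q * M by rewrite /Q /M -natrM ler0n.
  have : Sa ^+ 2 <= (Q * M) ^+ 2 / 8.
    apply: le_trans hSa _.
    have Ea0 : 0 <= Ea by rewrite /Ea ler0n.
    have : 0 <= Q ^+ 2 by apply: sqr_ge0.
    move: ha'; rewrite exprMn; nra.
  nra.
have h1 : \sum_(P | (P \in U) && ~~ a P && b P) tr P <= Sb.
  by apply: sum_sub => // P /andP[/andP[hU _] hb]; rewrite hU hb.
have h2 : \sum_(P | (P \in U) && ~~ a P && ~~ b P && c P) tr P <= 2 * M.
  apply: le_trans hB; apply: sum_sub => // P /andP[/andP[/andP[hU _] _] hc].
  by rewrite hU; exact: hc.
have h3 : \sum_(P | (P \in U) && ~~ a P && ~~ b P && ~~ c P) tr P <= 2 * Q ^+ 3.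
  apply: le_trans hN'; rewrite -hUc.
  apply: le_trans (_ : _ <= \sum_(P | (P \in U) && ~~ a P && ~~ b P && ~~ c P) 1) _.
    apply: ler_sum => P /andP[/andP[/andP[hU na] nb] nc].
    case: (leqP 2 (t P)) => ht; last by rewrite /tr lern1 -ltnS.
    exfalso; move: na nb nc; rewrite /a /b /c ht /= -!ltNge => hh.
    by rewrite hh /= -ltNge => ->.
  by apply: sum_sub => // P /andP[/andP[/andP[]]].
move: hsumR; rewrite -/Sa => hsumR.
have hSb : M * (Q + 1) - Sa - 2 * M - 2 * Q ^+ 3 <= Sb.
  rewrite -hsumR; lra.
have hK : Q * M = 2 ^+ 24 * Q ^+ 3 by rewrite hMQ; ring.
have hMK : M <= Q * M / 2.
  have M0 : 0 <= M by rewrite /M ler0n.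
  nra.
have hSb2 : 5 / 56 * (Q * M) <= Sb.
  have Q30 : 0 <= Q ^+ 3 by apply: exprn_ge0; lra.
  lra.
have hEb : Sb * (s * z) / 4 <= Eb.
  rewrite /Eb natr_sum /Sb mulr_suml mulr_suml; apply: ler_sum.
  move=> P /andP[_ /andP[/andP[h2t hlt] _]].
  have := C2 R h2t; rewrite -/(tr P) => hc2.
  have : tr P * (s * z) <= tr P ^+ 2.
    rewrite expr2; apply: ler_wpM2l => //; apply: ltW; exact: hlt.
  lra.
have hs : 7 / 5 * sm <= s.
  have : 0 <= sm by apply: ltW.
  nra.
have K0 : 0 <= Q * M by rewrite /Q /M -natrM ler0n.
have hSbs : Q * M * sm / 8 <= Sb * s.
  have : 5 / 56 * (Q * M) * (7 / 5 * sm) <= Sb * s.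
    apply: ler_pM => //; last by lra.
    by apply: mulr_ge0 => //; lra.
  lra.
have -> : Q * (M * sm) / (16 * L ^+ 2) = Q * M * sm * z ^+ 2 / 16.
  by rewrite /z; field; rewrite lt0r_neq0.
apply: le_trans hEb.
have KS0 : 0 <= Q * M * sm * z.
  by apply: mulr_ge0; [apply: mulr_ge0 => //; apply: ltW | apply: ltW].
have : Q * M * sm * z * z <= Q * M * sm * z / 2.
  by have := ler_wpM2l KS0 z2; lra.
have : Q * M * sm * z / 8 <= Sb * s * z.
  by have := ler_wpM2r (ltW z0) hSbs; lra.
move=> hh1 hh2; rewrite expr2.
have -> : Sb * (s * z) / 4 = Sb * s * z / 4 by ring.
lra.
Qed.

Lemma big_part (R : realFieldType) (T : finType) (X : {set {set T}}) (A : {set T})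
  (s : R) (m : nat) : #|X| = m -> 0 <= s -> s ^+ 2 = 2 * m%:R ->
  (\sum_(L in X) #|L :&: A| ^ 2 <= \sum_(P in A) tinc X P + #|A| ^ 2)%N ->
  (\sum_(P in A) tinc X P = \sum_(L in X) #|L :&: A|)%N ->
  (forall P, P \in A -> s < (tinc X P)%:R) ->
  ((\sum_(P in A) tinc X P)%N%:R : R) <= 2 * m%:R.
Proof.
move=> hX hs0 hs2 hpair hinc hA.
have hpR : \sum_(L in X) ((#|L :&: A|)%:R : R) ^+ 2 <=
    ((\sum_(P in A) tinc X P)%N)%:R + ((#|A|)%:R) ^+ 2.
  move: hpair; rewrite -(ler_nat R) natrD natr_sum natrX.
  by under eq_bigr do rewrite natrX.
have h1 : ((\sum_(P in A) tinc X P)%N%:R : R) ^+ 2 <=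
   m%:R * (((\sum_(P in A) tinc X P)%N)%:R + ((#|A|)%:R) ^+ 2).
  have := cauchy (fun L => L \in X) (fun L => (#|L :&: A|)%:R : R).
  rewrite hinc natr_sum => hc; apply: le_trans hc _.
  rewrite sumr_const hX; apply: ler_wpM2l; first by rewrite ler0n.
  by rewrite -natr_sum -hinc.
set Tn := (\sum_(P in A) tinc X P)%N in hpR h1 *.
set Tr : R := Tn%:R in hpR h1 *.
set b : R := (#|A|)%:R in hpR h1 *.
set M : R := m%:R in hpR h1 *.
have h2 : b * s <= Tr.
  rewrite /Tr /Tn natr_sum /b -sumr_const mulr_suml.
  apply: ler_sum => P hP; rewrite mul1r; exact: ltW (hA P hP).
have b0 : 0 <= b by rewrite ler0n.
have M0 : 0 <= M by rewrite ler0n.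
have h3 : M * b ^+ 2 <= Tr ^+ 2 / 2.
  have : (b * s) ^+ 2 <= Tr ^+ 2.
    have bs0 : 0 <= b * s by apply: mulr_ge0.
    have T0 : 0 <= Tr by rewrite ler0n.
    nra.
  rewrite exprMn hs2 -/M; lra.
have T0 : 0 <= Tr by rewrite ler0n.
nra.
Qed.

Unset Implicit Arguments.

Lemma ln_ge2 (R : realType) (n : nat) : (12 <= n)%N -> 2 <= ln (n%:R : R).
Proof.
move=> hn.
have e1 := @expR_ge1Dx R (- 3^-1).
have e0 : sequences.expR (3^-1 : R) * sequences.expR (- 3^-1) = 1 by rewrite -expRD subrr expR0.
have y0 := @expR_gt0 R (3^-1).
have e2 : sequences.expR (3^-1 : R) <= 3 / 2 by nra.
have e3 : sequences.expR (2 : R) = sequences.expR (3^-1) ^+ 6.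
  by rewrite -expRM_natl; congr sequences.expR; field.
have e4 : sequences.expR (2 : R) <= 12.
  rewrite e3; apply: le_trans (_ : (3 / 2) ^+ 6 <= 12).
    by apply: lerXn2r => //; rewrite nnegrE ?(ltW y0) //; lra.
  rewrite !exprS expr0; lra.
rewrite -[X in X <= _](expRK 2) ler_ln ?posrE ?expR_gt0 //; last first.
  by rewrite ltr0n; apply: leq_trans hn.
apply: le_trans e4 _; by rewrite (ler_nat R 12 n).
Qed.

Theorem mainTheorem6 (R : realType) (F : finFieldType) (q : nat)
  (hq2 : (2 <= q)%N) (hqpp : prime_power q) (hF : #|F| = (q ^ 2)%N)
  (X : {set {set {set 'rV[F]_3}}}) (hX : X \subset secants F q)
  (hXm : #|X| = (2 ^ 24 * q ^ 2)%N) :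
  let n := (q ^ 2 * (q ^ 2 - q + 1))%N in
  let m := (2 ^ 24 * q ^ 2)%N in
  let bnd : R := Num.sqrt (2 * m%:R : R) / ln (n%:R : R) in
  ((\sum_(P in unital F q | (2 <= Tsize q X P)%N && ((Tsize q X P)%:R <= bnd))
      'C(Tsize q X P, 2))%:R >= (m%:R ^+ 2 / (64 * q%:R) : R))
  \/
  ((\sum_(P in unital F q | (2 <= Tsize q X P)%N && (bnd < (Tsize q X P)%:R)
                           && ((Tsize q X P)%:R <= Num.sqrt (2 * m%:R : R)))
      'C(Tsize q X P, 2))%:R
     >= (q%:R * (m%:R * Num.sqrt (m%:R : R)) / (16 * ln (n%:R : R) ^+ 2) : R)).
Proof.
move=> n m bnd.
rewrite -/m in hXm.
have ht : forall P, Tsize q X P = tinc X P.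
  move=> P; rewrite /Tsize /tinc; apply: eq_card => L; rewrite !inE.
  case hL: (L \in X) => //=.
  by have := subsetP hX L hL; rewrite inE => ->.
have hpair : forall P P', P \in unital F q -> P' \in unital F q -> P != P' ->
    (#|[set L in X | (P \in L) && (P' \in L)]| <= 1)%N.
  move=> P P' hP hP' ne; apply/card_le1_eqP => L1 L2; rewrite !inE.
  move=> /andP[h1 /andP[a1 a2]] /andP[h2 /andP[a3 a4]].
  have := subsetP hX L1 h1; rewrite inE => /andP[l1 _].
  have := subsetP hX L2 h2; rewrite inE => /andP[l2 _].
  by apply/esym; exact: (lines_meet l1 l2 hP hP' ne a1 a2 a3 a4).
have hsum : (\sum_(P in unital F q) Tsize q X P)%N = (m * q.+1)%N.
  under eq_bigr do rewrite ht.
  rewrite inc_sum -hXm -sum_nat_const; apply: eq_bigr => L hL.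
  have := subsetP hX L hL; rewrite inE => /andP[_ /eqP].
  by rewrite setIC.
have hN := card_unital hF hq2.
have m0 : (0 : R) < m%:R by rewrite ltr0n /m; nia.
have hs0 : (0 : R) <= Num.sqrt (2 * m%:R) by apply: sqrtr_ge0.
have hs2 : Num.sqrt (2 * m%:R : R) ^+ 2 = 2 * m%:R by rewrite sqr_sqrtr //; lra.
have hsm : (0 : R) < Num.sqrt (m%:R) by rewrite sqrtr_gt0.
have hsm2 : Num.sqrt (m%:R : R) ^+ 2 = m%:R by rewrite sqr_sqrtr //; lra.
have hL : (2 : R) <= ln (n%:R) by apply: ln_ge2; rewrite /n; nia.
have hB : \sum_(P in unital F q | Num.sqrt (2 * m%:R : R) < (Tsize q X P)%:R)
            ((Tsize q X P)%:R : R) <= 2 * m%:R.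
  pose A := [set P in unital F q | Num.sqrt (2 * m%:R : R) < (Tsize q X P)%:R].
  have hpA : (\sum_(L in X) #|L :&: A| ^ 2 <= \sum_(P in A) tinc X P + #|A| ^ 2)%N.
    apply: pair_bound => P P'; rewrite !inE => /andP[hP _] /andP[hP' _]; exact: hpair.
  have hA' : forall P, P \in A -> Num.sqrt (2 * m%:R : R) < (tinc X P)%:R.
    by move=> P; rewrite inE -ht => /andP[].
  have H := @big_part R _ X A (Num.sqrt (2 * m%:R)) m hXm hs0 hs2 hpA (@inc_sum _ X A) hA'.
  apply: le_trans H.
  rewrite natr_sum [X in _ <= X]big_mkcond big_mkcond /=.
  rewrite [X in X <= _]big_mkcond /=.
  apply: ler_sum => P _; rewrite !inE ht; by case: ifP.
have hm : m = (2 ^ 24 * q ^ 2)%N by rewrite /m.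
exact: (core (t := fun P => Tsize q X P) hq2 hm hN hsum hs0 hs2 hsm hsm2 hL hB).
Qed.
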